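(* Assume the setting and hypotheses (i)–(iii) of the following context, with parameters $\alpha,\alpha_0,\beta'>0$. Let $w_{\min}:=\min_i w_i$, and let $$q:=\frac{2w_{\max}}{w_{\min}}\Big[\frac{2\alpha}{\sqrt d}\Big(1+\alpha_0\sqrt{\tfrac kd}\Big)^2+\beta'\Big],$$ and assume $q<1/2$. Let $\Psi$ be a tensor with $\psi:=\|\Psi\|\le w_{\min}/6$, and $\hat T=T+\Psi$. Fix $j\in[k]$ and unit vectors $\hat a,\hat b$ with $\epsilon_0:=\max\{\mathrm{dist}(\hat a,a_j),\mathrm{dist}(\hat b,b_j)\}$ satisfying $$\epsilon_0\le\min\Big\{\frac{\beta'}{\alpha_0},\ \sqrt{\frac{w_{\min}}{6w_{\max}}},\ \frac{w_{\min}q}{4w_{\max}},\ \frac{2w_{\max}}{w_{\min}q}\Big(\frac{w_{\min}}{6w_{\max}}-\alpha\frac{\sqrt k}{d}\Big)\Big\}.$$ Let $\hat c:=\hat T(\hat a,\hat b,I)/\|\hat T(\hat a,\hat b,I)\|$ and $\mathrm{Const}:=\frac{2}{w_{\min}}\big(\psi+w_{\max}\alpha\frac{\sqrt k}{d}\big)$. Then $\mathrm{dist}(\hat c,c_j)\le \mathrm{Const}+q\epsilon_0$. Moreover, if $\mathrm{dist}(\hat c,c_j)\le\epsilon_0$, then $\hat w:=\hat T(\hat a,\hat b,\hat c)$ satisfies $|\hat w-w_j|\le \frac{w_{\min}}{2}\mathrm{Const}+w_{\min}q\epsilon_0$.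
   Context: Setting: $w_1,\dots,w_k>0$, $w_{\max}=\max_i w_i$; $a_i,b_i,c_i\in\mathbb{R}^d$ unit vectors; $T=\sum_{i\in[k]}w_i a_i\otimes b_i\otimes c_i$; $A=[a_1\cdots a_k]$, $B$, $C$ similarly. Hypotheses: (i) $\max_{i\ne j}\max\{|\langle a_i,a_j\rangle|,|\langle b_i,b_j\rangle|,|\langle c_i,c_j\rangle|\}\le\alpha/\sqrt d$; (ii) $\max\{\|A\|,\|B\|,\|C\|\}\le 1+\alpha_0\sqrt{k/d}$; (iii) $\|T\|\le\alpha_0w_{\max}$ and for every $j$, $\|\sum_{i\ne j}w_i\langle a_i,a_j\rangle\langle b_i,b_j\rangle c_i\|\le\alpha w_{\max}\sqrt k/d$. Multilinear form: $T(u,v,w)=\sum_{i,j,l}T_{ijl}u_iv_jw_l$; $T(u,v,I)$ is the vector with $l$-th entry $\sum_{i,j}T_{ijl}u_iv_j$. Tensor spectral norm $\|T\|=\sup_{\|u\|=\|v\|=\|w\|=1}|T(u,v,w)|$; matrix norms are spectral norms. $\mathrm{dist}(u,v):=\sup_{z\perp u}\frac{\langle z,v\rangle}{\|z\|\|v\|}$. *)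

(* Defs.v *)
(* classical reals. Vectors in R^n are functions nat -> R of which
   only indices 0..n-1 matter; 3-tensors in R^{d x d x d} are nat -> nat -> nat -> R. *)
From Stdlib Require Import Reals Lra Lia Classical ClassicalEpsilon.
Open Scope R_scope.

Definition vec := nat -> R.
Definition tensor3 := nat -> nat -> nat -> R.

Fixpoint rsum (n : nat) (f : nat -> R) : R :=
  match n with O => 0 | S m => rsum m f + f m end.

Fixpoint rmax_upto (n : nat) (f : nat -> R) : R :=
  match n with O => f O | S m => Rmax (rmax_upto m f) (f n) end.
(* max_{i < k} f i  (meaningful for k >= 1) *)
Definition rmax_lt (k : nat) (f : nat -> R) : R := rmax_upto (k - 1) f.
Fixpoint rmin_upto (n : nat) (f : nat -> R) : R :=
  match n with O => f O | S m => Rmin (rmin_upto m f) (f n) end.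
Definition rmin_lt (k : nat) (f : nat -> R) : R := rmin_upto (k - 1) f.

Definition dot (d : nat) (u v : vec) : R := rsum d (fun i => u i * v i).
Definition vnorm (d : nat) (u : vec) : R := sqrt (dot d u u).
Definition is_unit (d : nat) (u : vec) : Prop := vnorm d u = 1.

(* supremum of a set of reals: the least upper bound when it exists *)
Definition sup_R (E : R -> Prop) : R := epsilon (inhabits 0) (fun m => is_lub E m).

Definition tform (d : nat) (T : tensor3) (u v w : vec) : R :=
  rsum d (fun i => rsum d (fun j => rsum d (fun l => T i j l * u i * v j * w l))).
Definition tform_I (d : nat) (T : tensor3) (u v : vec) : vec :=
  fun l => rsum d (fun i => rsum d (fun j => T i j l * u i * v j)).

Definition tnorm (d : nat) (T : tensor3) : R :=
  sup_R (fun r => exists u v w, is_unit d u /\ is_unit d v /\ is_unit d w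
                           /\ r = Rabs (tform d T u v w)).

Definition colmat_norm (d k : nat) (a : nat -> vec) : R :=
  sup_R (fun r => exists x : vec, is_unit k x
                  /\ r = vnorm d (fun l => rsum k (fun i => x i * a i l))).

(* dist(u,v) = sup_{z ⊥ u} <z,v>/(|z| |v|); the value 0 is included in the set
   (nonnegativity convention, only relevant when no nonzero z ⊥ u exists, d = 1) *)
Definition vdist (d : nat) (u v : vec) : R :=
  sup_R (fun r => r = 0 \/ exists z : vec, vnorm d z <> 0 /\ dot d z u = 0
                  /\ r = dot d z v / (vnorm d z * vnorm d v)).

Definition cp_tensor (k : nat) (w : nat -> R) (a b c : nat -> vec) : tensor3 :=
  fun p q r => rsum k (fun i => w i * a i p * b i q * c i r).

(* Main.v *)
Require Import Defs.
From Stdlib Require Import Reals Lra Lia Psatz ClassicalEpsilon.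
Open Scope R_scope.

Lemma rsum_ext n f g : (forall i, (i<n)%nat -> f i = g i) -> rsum n f = rsum n g.
Proof. induction n; simpl; intros H; auto. rewrite IHn by (intros; apply H; lia). rewrite (H n) by lia; auto. Qed.
Lemma rsum_plus n f g : rsum n (fun i => f i + g i) = rsum n f + rsum n g.
Proof. induction n; simpl; [lra|]. rewrite IHn; lra. Qed.
Lemma rsum_scal n c f : rsum n (fun i => c * f i) = c * rsum n f.
Proof. induction n; simpl; [lra|]. rewrite IHn; lra. Qed.
Lemma rsum_scal_r n c f : rsum n (fun i => f i * c) = rsum n f * c.
Proof. induction n; simpl; [lra|]. rewrite IHn; lra. Qed.
Lemma rsum_0 n : rsum n (fun _ => 0) = 0.
Proof. induction n; simpl; [lra|]. rewrite IHn; lra. Qed.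
Lemma rsum_swap n m F : rsum n (fun i => rsum m (fun j => F i j)) = rsum m (fun j => rsum n (fun i => F i j)).
Proof. induction n; simpl. rewrite rsum_0; auto. rewrite IHn. rewrite rsum_plus. auto. Qed.
Lemma rsum_le n f g : (forall i, (i<n)%nat -> f i <= g i) -> rsum n f <= rsum n g.
Proof. induction n; simpl; intros H; [lra|].
  assert (rsum n f <= rsum n g) by (apply IHn; intros; apply H; lia).
  specialize (H n ltac:(lia)). lra. Qed.
Lemma rsum_nonneg n f : (forall i, (i<n)%nat -> 0 <= f i) -> 0 <= rsum n f.
Proof. intros H. rewrite <- (rsum_0 n). apply rsum_le; auto. Qed.
Lemma rsum_abs n f : Rabs (rsum n f) <= rsum n (fun i => Rabs (f i)).
Proof. induction n; simpl. rewrite Rabs_R0; lra.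
  eapply Rle_trans. apply Rabs_triang. lra. Qed.
Lemma rsum_single n j x : (j<n)%nat -> rsum n (fun i => if Nat.eq_dec i j then x else 0) = x.
Proof. induction n; intros H; [lia|]. simpl. destruct (Nat.eq_dec n j).
  - subst. rewrite (rsum_ext _ _ (fun _ => 0)). rewrite rsum_0; lra.
    intros i Hi. destruct (Nat.eq_dec i j); [lia|auto].
  - rewrite IHn by lia. lra. Qed.
Lemma rsum_term_le n f i : (forall i, (i<n)%nat -> 0 <= f i) -> (i < n)%nat -> f i <= rsum n f.
Proof. induction n; intros H Hi; [lia|]. simpl.
  assert (0 <= rsum n f) by (apply rsum_nonneg; intros; apply H; lia).
  destruct (Nat.eq_dec i n). subst; lra.
  assert (f i <= rsum n f) by (apply IHn; [intros; apply H; lia| lia]). specialize (H n ltac:(lia)). lra. Qed.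
Lemma rsum_zero_each n f : (forall i, (i<n)%nat -> 0 <= f i) -> rsum n f = 0 -> forall i, (i<n)%nat -> f i = 0.
Proof. intros H H0 i Hi. pose proof (rsum_term_le n f i H Hi). specialize (H i Hi). lra. Qed.

Lemma dot_comm d u v : dot d u v = dot d v u.
Proof. unfold dot. apply rsum_ext; intros; ring. Qed.
Lemma dot_pos d u : 0 <= dot d u u.
Proof. unfold dot. apply rsum_nonneg. intros. nra. Qed.
Lemma vnorm_pos d u : 0 <= vnorm d u.
Proof. apply sqrt_pos. Qed.
Lemma vnorm_sq d u : vnorm d u * vnorm d u = dot d u u.
Proof. unfold vnorm. apply sqrt_sqrt, dot_pos. Qed.
Lemma vnorm_ext d u v : (forall i, (i<d)%nat -> u i = v i) -> vnorm d u = vnorm d v.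
Proof. intros H. unfold vnorm, dot. f_equal. apply rsum_ext. intros; rewrite H; auto. Qed.
Lemma vnorm_zero d : vnorm d (fun _ => 0) = 0.
Proof. unfold vnorm, dot. rewrite (rsum_ext _ _ (fun _ => 0)), rsum_0. apply sqrt_0. intros; ring. Qed.
Lemma vnorm0_coord d u : vnorm d u = 0 -> forall i, (i<d)%nat -> u i = 0.
Proof. intros H i Hi. pose proof (vnorm_sq d u). rewrite H in H0.
  assert (u i * u i = 0). { apply (rsum_zero_each d (fun i => u i * u i)); auto. intros; nra. unfold dot in H0; lra. }
  nra. Qed.
Lemma coord_le d u i : (i<d)%nat -> Rabs (u i) <= vnorm d u.
Proof. intros Hi. pose proof (vnorm_sq d u). pose proof (vnorm_pos d u).
  assert (u i * u i <= dot d u u) by (apply (rsum_term_le d (fun i => u i * u i)); auto; intros; nra).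
  rewrite <- sqrt_Rsqr_abs. unfold vnorm. apply sqrt_le_1_alt. unfold Rsqr; lra. Qed.

Lemma cs_sq d u v : (dot d u v) * (dot d u v) <= dot d u u * dot d v v.
Proof. unfold dot. induction d; simpl. lra.
  set (A := rsum d (fun i => u i * v i)) in *.
  set (P := rsum d (fun i => u i * u i)) in *.
  set (Q := rsum d (fun i => v i * v i)) in *.
  assert (HP : 0 <= P) by (apply rsum_nonneg; intros; nra).
  assert (HQ : 0 <= Q) by (apply rsum_nonneg; intros; nra).
  set (x := u d) in *. set (y := v d) in *. clearbody A P Q x y.
  assert (2 * A * x * y <= P * y * y + Q * x * x).
  { destruct (Req_dec P 0) as [HP0|HP0].
    - assert (HA : A = 0) by nra. rewrite HA, HP0. nra.
    - assert (0 <= (P*y - A*x)*(P*y-A*x)) by apply Rle_0_sqr.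
      assert (A*A*(x*x) <= P*Q*(x*x)) by (apply Rmult_le_compat_r; nra).
      assert (P * (P*y*y - 2*A*x*y + Q*x*x) >= 0) by nra.
      assert (0 < P) by lra. nra. }
  nra. Qed.
Lemma cs d u v : Rabs (dot d u v) <= vnorm d u * vnorm d v.
Proof. pose proof (cs_sq d u v). rewrite <- !vnorm_sq in H.
  pose proof (vnorm_pos d u). pose proof (vnorm_pos d v).
  rewrite <- sqrt_Rsqr_abs. rewrite <- (sqrt_Rsqr (vnorm d u * vnorm d v)) by nra.
  apply sqrt_le_1_alt. unfold Rsqr; nra. Qed.
Lemma cs' d u v : dot d u v <= vnorm d u * vnorm d v.
Proof. pose proof (cs d u v). pose proof (Rle_abs (dot d u v)). lra. Qed.

Lemma vnorm_le_sq d u x : 0 <= x -> dot d u u <= x * x -> vnorm d u <= x.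
Proof. intros. pose proof (vnorm_sq d u). pose proof (vnorm_pos d u). nra. Qed.

Lemma vnorm_triang d u v : vnorm d (fun l => u l + v l) <= vnorm d u + vnorm d v.
Proof. apply vnorm_le_sq. pose proof (vnorm_pos d u); pose proof (vnorm_pos d v); lra.
  assert (dot d (fun l => u l + v l) (fun l => u l + v l) = dot d u u + 2 * dot d u v + dot d v v).
  { unfold dot. rewrite <- !rsum_scal, <- !rsum_plus. apply rsum_ext; intros; ring. }
  rewrite H. pose proof (cs' d u v). rewrite <- !vnorm_sq. nra. Qed.
Lemma vnorm_scal d c u : vnorm d (fun l => c * u l) = Rabs c * vnorm d u.
Proof. unfold vnorm. rewrite <- (sqrt_Rsqr (Rabs c)) by apply Rabs_pos.
  rewrite <- sqrt_mult_alt by apply Rle_0_sqr. f_equal. unfold dot. rewrite <- rsum_scal.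
  apply rsum_ext; intros. rewrite <- Rsqr_abs. unfold Rsqr; ring. Qed.
Lemma vnorm_opp d u : vnorm d (fun l => - u l) = vnorm d u.
Proof. rewrite (vnorm_ext _ _ (fun l => -1 * u l)) by (intros; ring). rewrite vnorm_scal.
  replace (Rabs (-1)) with 1 by (rewrite Rabs_left by lra; ring). ring. Qed.
Lemma vnorm_rsum_le d k F : vnorm d (fun l => rsum k (fun i => F i l)) <= rsum k (fun i => vnorm d (F i)).
Proof. induction k; simpl. rewrite vnorm_zero; lra.
  eapply Rle_trans. apply vnorm_triang. lra. Qed.
Lemma vnorm_pointwise n f g delta : 0 <= delta -> (forall i, (i<n)%nat -> Rabs (f i) <= delta * Rabs (g i)) ->
  vnorm n f <= delta * vnorm n g.
Proof. intros Hd H. apply vnorm_le_sq. pose proof (vnorm_pos n g); nra.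
  replace (delta * vnorm n g * (delta * vnorm n g)) with (delta*delta * (vnorm n g * vnorm n g)) by ring.
  rewrite vnorm_sq. unfold dot. rewrite <- rsum_scal. apply rsum_le. intros i Hi.
  specialize (H i Hi). pose proof (Rabs_pos (f i)).
  rewrite <- (Rabs_mult_self (f i)), <- (Rabs_mult_self (g i)) || idtac.
  assert (Rabs (f i) * Rabs (f i) <= (delta * Rabs (g i)) * (delta * Rabs (g i))) by (apply Rmult_le_compat; auto).
  assert (E1: Rabs (f i) * Rabs (f i) = f i * f i) by (rewrite <- Rabs_mult; apply Rabs_pos_eq; nra).
  assert (E2: Rabs (g i) * Rabs (g i) = g i * g i) by (rewrite <- Rabs_mult; apply Rabs_pos_eq; nra).
  nra. Qed.

Lemma sup_lub E : (exists x, E x) -> (exists M, forall x, E x -> x <= M) -> is_lub E (sup_R E).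
Proof. intros Hne [M HM]. unfold sup_R. apply epsilon_spec.
  destruct (completeness E) as [m Hm]; [exists M; intros x Hx; apply HM; auto | auto | exists m; auto]. Qed.
Lemma sup_ge E x : (exists M, forall x, E x -> x <= M) -> E x -> x <= sup_R E.
Proof. intros HM Hx. apply (sup_lub E); eauto. Qed.
Lemma sup_le E B : (exists x, E x) -> (forall x, E x -> x <= B) -> sup_R E <= B.
Proof. intros Hne HB. apply (sup_lub E); eauto. Qed.

Lemma rsum3_abs d G : Rabs (rsum d (fun i => rsum d (fun j => rsum d (fun l => G i j l))))
  <= rsum d (fun i => rsum d (fun j => rsum d (fun l => Rabs (G i j l)))).
Proof. eapply Rle_trans. apply rsum_abs. apply rsum_le; intros.
  eapply Rle_trans. apply rsum_abs. apply rsum_le; intros. apply rsum_abs. Qed.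
Lemma rsum3_scal d c F : rsum d (fun i => rsum d (fun j => rsum d (fun l => c * F i j l)))
  = c * rsum d (fun i => rsum d (fun j => rsum d (fun l => F i j l))).
Proof. rewrite <- rsum_scal. apply rsum_ext; intros. rewrite <- rsum_scal. apply rsum_ext; intros.
  apply rsum_scal. Qed.

Definition has_unit d := exists u, is_unit d u.

Lemma tnorm_set_bounded d T : exists M, forall x,
  (exists u v w, is_unit d u /\ is_unit d v /\ is_unit d w /\ x = Rabs (tform d T u v w)) -> x <= M.
Proof. exists (rsum d (fun i => rsum d (fun j => rsum d (fun l => Rabs (T i j l))))).
  intros x (u & v & w & Hu & Hv & Hw & ->). unfold tform.
  eapply Rle_trans. apply rsum3_abs. apply rsum_le; intros i Hi; apply rsum_le; intros j Hj; apply rsum_le; intros l Hl.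
  pose proof (coord_le d u i Hi); pose proof (coord_le d v j Hj); pose proof (coord_le d w l Hl).
  unfold is_unit in *. rewrite !Rabs_mult.
  pose proof (Rabs_pos (T i j l)); pose proof (Rabs_pos (u i)); pose proof (Rabs_pos (v j)); pose proof (Rabs_pos (w l)).
  assert (Rabs (T i j l) * Rabs (u i) <= Rabs (T i j l)) by nra.
  assert (Rabs (T i j l) * Rabs (u i) * Rabs (v j) <= Rabs (T i j l)) by nra.
  nra. Qed.

Lemma tnorm_ge d T u v w : is_unit d u -> is_unit d v -> is_unit d w -> Rabs (tform d T u v w) <= tnorm d T.
Proof. intros. unfold tnorm. apply sup_ge. apply tnorm_set_bounded. exists u, v, w; auto. Qed.
Lemma tnorm_nonneg d T : has_unit d -> 0 <= tnorm d T.
Proof. intros [u Hu]. eapply Rle_trans; [apply Rabs_pos| apply (tnorm_ge d T u u u); auto]. Qed.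

Lemma rsum_z n f : (forall i, (i<n)%nat -> f i = 0) -> rsum n f = 0.
Proof. intros H. rewrite (rsum_ext _ _ (fun _ => 0)) by auto. apply rsum_0. Qed.
Lemma zero_tform1 d T u v w : vnorm d u = 0 -> tform d T u v w = 0.
Proof. intros H. unfold tform. apply rsum_z; intros i Hi.
  rewrite (vnorm0_coord d u H i Hi). apply rsum_z; intros.
  apply rsum_z; intros. ring. Qed.
Lemma zero_tform2 d T u v w : vnorm d v = 0 -> tform d T u v w = 0.
Proof. intros H. unfold tform. apply rsum_z; intros i Hi.
  apply rsum_z; intros j Hj. rewrite (vnorm0_coord d v H j Hj).
  apply rsum_z; intros. ring. Qed.
Lemma zero_tform3 d T u v w : vnorm d w = 0 -> tform d T u v w = 0.
Proof. intros H. unfold tform. apply rsum_z; intros i Hi.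
  apply rsum_z; intros j Hj.
  apply rsum_z; intros l Hl. rewrite (vnorm0_coord d w H l Hl). ring. Qed.

Lemma normalize_unit d u : vnorm d u <> 0 -> is_unit d (fun l => / vnorm d u * u l).
Proof. intros H. unfold is_unit. rewrite vnorm_scal. pose proof (vnorm_pos d u).
  rewrite Rabs_pos_eq. field; auto. apply Rlt_le, Rinv_0_lt_compat. lra. Qed.

Lemma tform_bound d T u v w : has_unit d ->
  Rabs (tform d T u v w) <= tnorm d T * vnorm d u * vnorm d v * vnorm d w.
Proof. intros Hu. pose proof (tnorm_nonneg d T Hu).
  pose proof (vnorm_pos d u); pose proof (vnorm_pos d v); pose proof (vnorm_pos d w).
  destruct (Req_dec (vnorm d u) 0) as [E|Nu]. rewrite zero_tform1, Rabs_R0 by auto. nra.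
  destruct (Req_dec (vnorm d v) 0) as [E|Nv]. rewrite zero_tform2, Rabs_R0 by auto. nra.
  destruct (Req_dec (vnorm d w) 0) as [E|Nw]. rewrite zero_tform3, Rabs_R0 by auto. nra.
  pose proof (tnorm_ge d T _ _ _ (normalize_unit d u Nu) (normalize_unit d v Nv) (normalize_unit d w Nw)).
  set (nu := vnorm d u) in *; set (nv := vnorm d v) in *; set (nw := vnorm d w) in *.
  assert (tform d T (fun l => / nu * u l) (fun l => / nv * v l) (fun l => / nw * w l)
     = / (nu * nv * nw) * tform d T u v w).
  { unfold tform. rewrite <- rsum3_scal. apply rsum_ext; intros; apply rsum_ext; intros; apply rsum_ext; intros.
    field. repeat split; auto. }
  rewrite H4 in H3. rewrite Rabs_mult in H3. rewrite Rabs_pos_eq in H3 by (apply Rlt_le, Rinv_0_lt_compat; apply Rmult_lt_0_compat; [apply Rmult_lt_0_compat|]; lra).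
  assert (0 < nu * nv * nw) by (apply Rmult_lt_0_compat; [apply Rmult_lt_0_compat|]; lra).
  apply (Rmult_le_compat_l (nu*nv*nw)) in H3; [|lra].
  rewrite <- Rmult_assoc, Rinv_r, Rmult_1_l in H3 by lra. lra. Qed.

Lemma tform_I_dot d T x y g : dot d (tform_I d T x y) g = tform d T x y g.
Proof. unfold dot, tform_I, tform.
  rewrite (rsum_ext _ _ (fun l => rsum d (fun i => rsum d (fun j => T i j l * x i * y j * g l)))).
  2:{ intros l Hl. rewrite <- rsum_scal_r. apply rsum_ext; intros. rewrite <- rsum_scal_r. auto. }
  rewrite rsum_swap. apply rsum_ext; intros. apply rsum_swap. Qed.

Lemma tform_I_bound d T x y : has_unit d -> vnorm d (tform_I d T x y) <= tnorm d T * vnorm d x * vnorm d y.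
Proof. intros Hu. set (g := tform_I d T x y).
  pose proof (tform_bound d T x y g Hu). rewrite <- tform_I_dot in H. fold g in H.
  rewrite <- vnorm_sq in H. pose proof (vnorm_pos d g).
  pose proof (tnorm_nonneg d T Hu); pose proof (vnorm_pos d x); pose proof (vnorm_pos d y).
  rewrite Rabs_pos_eq in H by nra.
  destruct (Req_dec (vnorm d g) 0) as [E|N]. rewrite E; apply Rmult_le_pos; [apply Rmult_le_pos|]; auto.
  assert (vnorm d g * vnorm d g <= (tnorm d T * vnorm d x * vnorm d y) * vnorm d g) by lra.
  apply Rmult_le_reg_r in H4; lra. Qed.

Definition ej (j : nat) : vec := fun i => if Nat.eq_dec i j then 1 else 0.
Lemma ej_unit k j : (j<k)%nat -> is_unit k (ej j).
Proof. intros H. unfold is_unit, vnorm, dot, ej.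
  rewrite (rsum_ext _ _ (fun i => if Nat.eq_dec i j then 1 else 0)).
  rewrite rsum_single by auto. apply sqrt_1.
  intros i _. destruct (Nat.eq_dec i j); ring. Qed.

Section Col.
Variables (d k : nat) (a : nat -> vec).
Hypothesis Hk : exists j, (j < k)%nat.
Hypothesis Ha : forall i, (i<k)%nat -> is_unit d (a i).

Let E := fun r => exists x : vec, is_unit k x
                  /\ r = vnorm d (fun l => rsum k (fun i => x i * a i l)).
Lemma col_ne : exists r, E r.
Proof. destruct Hk as [j Hj]. eexists; exists (ej j); split; [apply ej_unit; auto| reflexivity]. Qed.
Lemma col_bdd : exists M, forall r, E r -> r <= M.
Proof. exists (rsum k (fun _ => 1)). intros r (x & Hx & ->).
  eapply Rle_trans. apply (vnorm_rsum_le d k (fun i l => x i * a i l)).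
  apply rsum_le; intros i Hi. rewrite vnorm_scal. rewrite (Ha i Hi).
  pose proof (coord_le k x i Hi). unfold is_unit in Hx. lra. Qed.
Lemma col_nonneg : 0 <= colmat_norm d k a.
Proof. destruct col_ne as [r Hr]. eapply Rle_trans; [|apply (sup_ge E r col_bdd Hr)].
  destruct Hr as (x & _ & ->). apply vnorm_pos. Qed.
Lemma col_bound x : vnorm d (fun l => rsum k (fun i => x i * a i l)) <= colmat_norm d k a * vnorm k x.
Proof. pose proof col_nonneg. pose proof (vnorm_pos k x).
  destruct (Req_dec (vnorm k x) 0) as [Z|N].
  - rewrite Z, Rmult_0_r. rewrite (vnorm_ext _ _ (fun _ => 0)). rewrite vnorm_zero; lra.
    intros l _. apply rsum_z. intros i Hi. rewrite (vnorm0_coord k x Z i Hi). ring.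
  - assert (Hr : E (vnorm d (fun l => rsum k (fun i => (/ vnorm k x * x i) * a i l)))).
    { unfold E. exists (fun i => / vnorm k x * x i); split; [apply normalize_unit; auto | reflexivity]. }
    pose proof (sup_ge E _ col_bdd Hr). fold E in H1. unfold colmat_norm.
    change (sup_R E) with (sup_R (fun r => exists x : vec, is_unit k x
                  /\ r = vnorm d (fun l => rsum k (fun i => x i * a i l)))) in H1.
    rewrite (vnorm_ext _ _ (fun l => / vnorm k x * rsum k (fun i => x i * a i l))) in H1.
    2:{ intros; rewrite <- rsum_scal; apply rsum_ext; intros; ring. }
    rewrite vnorm_scal in H1. rewrite Rabs_pos_eq in H1 by (apply Rlt_le, Rinv_0_lt_compat; lra).
    apply (Rmult_le_compat_l (vnorm k x)) in H1; [|lra].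
    rewrite <- Rmult_assoc, Rinv_r, Rmult_1_l in H1 by lra.
    unfold colmat_norm. lra. Qed.
Lemma col_T u : vnorm k (fun i => dot d (a i) u) <= colmat_norm d k a * vnorm d u.
Proof. set (y := fun i => dot d (a i) u).
  assert (dot k y y = dot d (fun l => rsum k (fun i => y i * a i l)) u).
  { unfold dot at 1. unfold y at 2. unfold dot.
    rewrite (rsum_ext _ _ (fun i => rsum d (fun l => y i * a i l * u l))).
    2:{ intros. rewrite <- rsum_scal. apply rsum_ext; intros; ring. }
    rewrite rsum_swap. apply rsum_ext; intros. rewrite <- rsum_scal_r. auto. }
  pose proof (cs' d (fun l => rsum k (fun i => y i * a i l)) u). rewrite <- H in H0.
  pose proof (col_bound y). rewrite <- vnorm_sq in H0.
  pose proof (vnorm_pos k y). pose proof (vnorm_pos d u). pose proof col_nonneg.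
  pose proof (vnorm_pos d (fun l => rsum k (fun i => y i * a i l))).
  assert (vnorm k y * vnorm k y <= colmat_norm d k a * vnorm k y * vnorm d u).
  { eapply Rle_trans. apply H0. apply Rmult_le_compat_r; auto. }
  destruct (Req_dec (vnorm k y) 0) as [Z|N]. rewrite Z. apply Rmult_le_pos; auto.
  assert (vnorm k y * vnorm k y <= (colmat_norm d k a * vnorm d u) * vnorm k y) by lra.
  apply Rmult_le_reg_r in H7; lra. Qed.
End Col.

Ltac lin := unfold dot; repeat rewrite <- rsum_scal; repeat rewrite <- rsum_plus; apply rsum_ext; intros; ring.

Lemma tformI_cp d k w a b c x y l : tform_I d (cp_tensor k w a b c) x y l
  = rsum k (fun i => w i * dot d (a i) x * dot d (b i) y * c i l).
Proof. unfold tform_I, cp_tensor.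
  rewrite (rsum_ext _ _ (fun p => rsum k (fun i => rsum d (fun q => w i * a i p * b i q * c i l * x p * y q)))).
  2:{ intros p _. rewrite <- rsum_swap. apply rsum_ext; intros q _. rewrite <- !rsum_scal_r. auto. }
  rewrite rsum_swap. apply rsum_ext; intros i _. unfold dot.
  replace (w i * rsum d (fun i0 => a i i0 * x i0) * rsum d (fun i0 => b i i0 * y i0) * c i l)
    with (rsum d (fun i0 => a i i0 * x i0) * (rsum d (fun i0 => b i i0 * y i0) * (w i * c i l))) by ring.
  rewrite <- rsum_scal_r. apply rsum_ext; intros p _.
  replace (a i p * x p * (rsum d (fun i0 => b i i0 * y i0) * (w i * c i l)))
    with (rsum d (fun i0 => b i i0 * y i0) * (a i p * x p * (w i * c i l))) by ring.
  rewrite <- rsum_scal_r. apply rsum_ext; intros; ring. Qed.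

Lemma tformI_add d T P x y l : tform_I d (fun p q r => T p q r + P p q r) x y l
  = tform_I d T x y l + tform_I d P x y l.
Proof. unfold tform_I. rewrite <- rsum_plus. apply rsum_ext; intros. rewrite <- rsum_plus.
  apply rsum_ext; intros; ring. Qed.

Section Dist.
Variables (d : nat) (u v : vec).
Let E := fun r => r = 0 \/ exists z : vec, vnorm d z <> 0 /\ dot d z u = 0
                  /\ r = dot d z v / (vnorm d z * vnorm d v).
Lemma dist_bdd : exists M, forall r, E r -> r <= M.
Proof. exists 1. intros r [->|(z & Hz & _ & ->)]. lra.
  pose proof (vnorm_pos d z). pose proof (vnorm_pos d v).
  destruct (Req_dec (vnorm d v) 0) as [Z|N].
  - rewrite Z, Rmult_0_r. unfold Rdiv. rewrite Rinv_0. lra.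
  - pose proof (cs' d z v). apply (Rmult_le_reg_r (vnorm d z * vnorm d v)).
    apply Rmult_lt_0_compat; lra. unfold Rdiv. rewrite Rmult_assoc, Rinv_l. lra.
    apply Rmult_integral_contrapositive; split; auto. Qed.
Lemma dist_ge r : E r -> r <= vdist d u v.
Proof. intros. apply (sup_ge E); auto. apply dist_bdd. Qed.
Lemma dist_nonneg : 0 <= vdist d u v.
Proof. apply dist_ge. left; auto. Qed.
Lemma dist_le B : 0 <= B -> (forall z, vnorm d z <> 0 -> dot d z u = 0 -> dot d z v / (vnorm d z * vnorm d v) <= B) ->
   vdist d u v <= B.
Proof. intros HB H. apply (sup_le E). exists 0; left; auto.
  intros r [->|(z & Hz & H0 & ->)]; auto. Qed.
End Dist.

Lemma decomp d x y : is_unit d x -> is_unit d y ->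
  dot d y (fun p => x p - dot d x y * y p) = 0 /\
  vnorm d (fun p => x p - dot d x y * y p) <= vdist d x y /\
  vnorm d (fun p => x p - dot d x y * y p) * vnorm d (fun p => x p - dot d x y * y p) = 1 - dot d x y * dot d x y.
Proof. intros Hx Hy. set (s := dot d x y). set (e := fun p => x p - s * y p).
  assert (Hxx : dot d x x = 1) by (rewrite <- vnorm_sq, Hx; ring).
  assert (Hyy : dot d y y = 1) by (rewrite <- vnorm_sq, Hy; ring).
  assert (H1 : dot d y e = 0).
  { transitivity (dot d y x + (-s) * dot d y y). unfold e; lin. rewrite dot_comm. fold s. rewrite Hyy. ring. }
  assert (H2 : dot d e e = 1 - s*s).
  { transitivity (dot d x x + (-2*s) * dot d x y + (s*s) * dot d y y). unfold e; lin.
    fold s. rewrite Hxx, Hyy. ring. }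
  rewrite <- vnorm_sq in H2.
  split; auto. split; [|auto].
  set (z := fun p => y p - s * x p).
  assert (Hz1 : dot d z x = 0).
  { transitivity (dot d y x + (-s) * dot d x x). unfold z; lin. rewrite dot_comm. fold s. rewrite Hxx. ring. }
  assert (Hz2 : dot d z y = 1 - s*s).
  { transitivity (dot d y y + (-s) * dot d x y). unfold z; lin. fold s. rewrite Hyy. ring. }
  assert (Hz3 : dot d z z = 1 - s*s).
  { transitivity (dot d y y + (-2*s) * dot d x y + (s*s) * dot d x x). unfold z; lin.
    fold s. rewrite Hxx, Hyy. ring. }
  rewrite <- vnorm_sq in Hz3. pose proof (vnorm_pos d e). pose proof (vnorm_pos d z).
  destruct (Req_dec (vnorm d e) 0) as [Z|N].
  - rewrite Z. apply dist_nonneg.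
  - assert (vnorm d z = vnorm d e) by nra.
    apply dist_ge. right. exists z. split; [lra|]. split; auto. rewrite Hz2, Hy, H3, <- H2. field. auto. Qed.

Lemma rmax_ge n f i : (i <= n)%nat -> f i <= rmax_upto n f.
Proof. induction n; intros H; simpl. replace i with O by lia; lra.
  destruct (Nat.eq_dec i (S n)). subst. apply Rmax_r. eapply Rle_trans; [apply IHn; lia| apply Rmax_l]. Qed.
Lemma rmin_le n f i : (i <= n)%nat -> rmin_upto n f <= f i.
Proof. induction n; intros H; simpl. replace i with O by lia; lra.
  destruct (Nat.eq_dec i (S n)). subst. apply Rmin_r. eapply Rle_trans; [apply Rmin_l| apply IHn; lia]. Qed.
Lemma rmin_pos n f : (forall i, (i <= n)%nat -> 0 < f i) -> 0 < rmin_upto n f.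
Proof. induction n; intros H; simpl. apply H; lia. apply Rmin_glb_lt. apply IHn; intros; apply H; lia. apply H; lia. Qed.

Lemma tform_chat d T x y : let v := tform_I d T x y in
  tform d T x y (fun l => v l / vnorm d v) = vnorm d v.
Proof. intros v. rewrite <- tform_I_dot. fold v.
  assert (dot d v (fun l => v l / vnorm d v) = dot d v v * / vnorm d v).
  { unfold dot. rewrite <- rsum_scal_r. apply rsum_ext; intros; unfold Rdiv; ring. }
  rewrite H, <- vnorm_sq. destruct (Req_dec (vnorm d v) 0) as [Z|N]. rewrite Z; ring. field; auto. Qed.

Lemma vnorm5 d (A B C D F : vec) : vnorm d (fun l => A l + B l + C l + D l + F l)
  <= vnorm d A + vnorm d B + vnorm d C + vnorm d D + vnorm d F.
Proof. eapply Rle_trans. apply (vnorm_triang d (fun l => A l + B l + C l + D l)).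
  eapply Rle_trans. apply Rplus_le_compat_r. apply (vnorm_triang d (fun l => A l + B l + C l)).
  eapply Rle_trans. apply Rplus_le_compat_r. apply Rplus_le_compat_r. apply (vnorm_triang d (fun l => A l + B l)).
  pose proof (vnorm_triang d A B). lra. Qed.

Theorem mainTheorem2
  (d k : nat) (w : nat -> R) (a b c : nat -> vec)
  (alpha alpha0 beta' : R) (Psi : tensor3) (j : nat) (ahat bhat : vec) :
  0 < alpha -> 0 < alpha0 -> 0 < beta' ->
  (j < k)%nat ->
  (forall i, (i < k)%nat -> 0 < w i) ->
  (forall i, (i < k)%nat -> is_unit d (a i) /\ is_unit d (b i) /\ is_unit d (c i)) ->
  (forall i i', (i < k)%nat -> (i' < k)%nat -> i <> i' ->
     Rabs (dot d (a i) (a i')) <= alpha / sqrt (INR d) /\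
     Rabs (dot d (b i) (b i')) <= alpha / sqrt (INR d) /\
     Rabs (dot d (c i) (c i')) <= alpha / sqrt (INR d)) ->
  Rmax (colmat_norm d k a) (Rmax (colmat_norm d k b) (colmat_norm d k c))
    <= 1 + alpha0 * sqrt (INR k / INR d) ->
  tnorm d (cp_tensor k w a b c) <= alpha0 * rmax_lt k w ->
  (forall j', (j' < k)%nat ->
     vnorm d (fun l => rsum k (fun i => if Nat.eq_dec i j' then 0
              else w i * dot d (a i) (a j') * dot d (b i) (b j') * c i l))
     <= alpha * rmax_lt k w * sqrt (INR k) / INR d) ->
  let wmax := rmax_lt k w in
  let wmin := rmin_lt k w in
  let q := 2 * wmax / wmin *
           (2 * alpha / sqrt (INR d) * (1 + alpha0 * sqrt (INR k / INR d)) ^ 2 + beta') in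
  q < 1 / 2 ->
  let psi := tnorm d Psi in
  psi <= wmin / 6 ->
  let T := cp_tensor k w a b c in
  let That : tensor3 := fun p q' r => T p q' r + Psi p q' r in
  is_unit d ahat -> is_unit d bhat ->
  let eps0 := Rmax (vdist d ahat (a j)) (vdist d bhat (b j)) in
  eps0 <= Rmin (Rmin (beta' / alpha0) (sqrt (wmin / (6 * wmax))))
               (Rmin (wmin * q / (4 * wmax))
                     (2 * wmax / (wmin * q) *
                        (wmin / (6 * wmax) - alpha * sqrt (INR k) / INR d))) ->
  let v := tform_I d That ahat bhat in
  let chat : vec := fun l => v l / vnorm d v in
  let Const := 2 / wmin * (psi + wmax * alpha * sqrt (INR k) / INR d) in
  vdist d chat (c j) <= Const + q * eps0 /\
  (vdist d chat (c j) <= eps0 ->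
     Rabs (tform d That ahat bhat chat - w j) <= wmin / 2 * Const + wmin * q * eps0).
Proof.
  intros Hal Hal0 Hbe Hj Hw Hu Hinc Hcol HT Hiii wmax wmin q Hq psi Hpsi T That Hah Hbh eps0 Heps v chat Const.
  assert (Hk : exists j0, (j0 < k)%nat) by eauto.
  assert (HU : has_unit d) by (exists (a j); apply Hu; auto).
  destruct (Hu j Hj) as (Haj & Hbj & Hcj).
  assert (Hwmax : forall i, (i < k)%nat -> w i <= wmax) by (intros; apply rmax_ge; lia).
  assert (Hwmin : forall i, (i < k)%nat -> wmin <= w i) by (intros; apply rmin_le; lia).
  assert (Hwmin0 : 0 < wmin) by (apply rmin_pos; intros; apply Hw; lia).
  pose proof (Hwmax j Hj) as Hwjx. pose proof (Hwmin j Hj) as Hwjn.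
  set (sa := dot d ahat (a j)). set (ea := fun p => ahat p - sa * a j p).
  set (sb := dot d bhat (b j)). set (eb := fun p => bhat p - sb * b j p).
  destruct (decomp d ahat (a j) Hah Haj) as (Hea0 & Hea1 & Hea2). fold sa ea in Hea0, Hea1, Hea2.
  destruct (decomp d bhat (b j) Hbh Hbj) as (Heb0 & Heb1 & Heb2). fold sb eb in Heb0, Heb1, Heb2.
  assert (Hea : vnorm d ea <= eps0) by (eapply Rle_trans; [apply Hea1| apply Rmax_l]).
  assert (Heb : vnorm d eb <= eps0) by (eapply Rle_trans; [apply Heb1| apply Rmax_r]).
  pose proof (dist_nonneg d ahat (a j)) as He0. assert (Heps0 : 0 <= eps0) by (eapply Rle_trans; [apply He0|apply Rmax_l]).
  set (P1 := fun l => sa * sb * rsum k (fun i => if Nat.eq_dec i j then 0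
              else w i * dot d (a i) (a j) * dot d (b i) (b j) * c i l)).
  set (za := fun i => (if Nat.eq_dec i j then 0 else w i * dot d (a i) (a j)) * dot d (b i) eb).
  set (zb := fun i => (if Nat.eq_dec i j then 0 else w i * dot d (b i) (b j)) * dot d (a i) ea).
  set (P2 := fun l => sa * rsum k (fun i => za i * c i l)).
  set (P3 := fun l => sb * rsum k (fun i => zb i * c i l)).
  set (P4 := tform_I d T ea eb).
  set (P5 := tform_I d Psi ahat bhat).
  set (r := fun l => P1 l + P2 l + P3 l + P4 l + P5 l).
  set (lam := w j * sa * sb).
  assert (Hv : forall l, v l = lam * c j l + r l).
  { intros l. unfold v, That, r. rewrite tformI_add. unfold P4, P5, T. rewrite !tformI_cp.
    enough (rsum k (fun i => w i * dot d (a i) ahat * dot d (b i) bhat * c i l) = lam * c j l + P1 l + P2 l + P3 l + rsum k (fun i => w i * dot d (a i) ea * dot d (b i) eb * c i l)) by lra.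
    unfold P1, P2, P3, za, zb.
    rewrite <- (rsum_single k j (lam * c j l)) by auto.
    rewrite <- !rsum_scal. rewrite <- !rsum_plus. apply rsum_ext. intros i Hi.
    assert (E1 : dot d (a i) ahat = sa * dot d (a i) (a j) + dot d (a i) ea) by (unfold ea; lin).
    assert (E2 : dot d (b i) bhat = sb * dot d (b i) (b j) + dot d (b i) eb) by (unfold eb; lin).
    rewrite E1, E2. destruct (Nat.eq_dec i j) as [->|N].
    - rewrite Hea0, Heb0. assert (dot d (a j) (a j) = 1) by (rewrite <- vnorm_sq, Haj; ring).
      assert (dot d (b j) (b j) = 1) by (rewrite <- vnorm_sq, Hbj; ring).
      rewrite H, H0. unfold lam. ring.
    - ring. }
  assert (Heps1 : eps0 <= beta' / alpha0) by (eapply Rle_trans; [apply Heps|]; eapply Rle_trans; [apply Rmin_l| apply Rmin_l]).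
  assert (Heps2 : eps0 <= sqrt (wmin / (6 * wmax))) by (eapply Rle_trans; [apply Heps|]; eapply Rle_trans; [apply Rmin_l| apply Rmin_r]).
  assert (Heps3 : eps0 <= wmin * q / (4 * wmax)) by (eapply Rle_trans; [apply Heps|]; eapply Rle_trans; [apply Rmin_r| apply Rmin_l]).
  set (M := 1 + alpha0 * sqrt (INR k / INR d)) in *.
  set (del := alpha / sqrt (INR d)) in *.
  set (K := alpha * wmax * sqrt (INR k) / INR d).
  assert (Hdel : 0 <= del).
  { unfold del, Rdiv. apply Rmult_le_pos. lra. destruct (Req_dec (sqrt (INR d)) 0) as [Z|Z].
    rewrite Z, Rinv_0; lra. apply Rlt_le, Rinv_0_lt_compat. pose proof (sqrt_pos (INR d)). lra. }
  assert (Hca : forall i, (i<k)%nat -> is_unit d (a i)) by (intros; apply Hu; auto).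
  assert (Hcb : forall i, (i<k)%nat -> is_unit d (b i)) by (intros; apply Hu; auto).
  assert (Hcc : forall i, (i<k)%nat -> is_unit d (c i)) by (intros; apply Hu; auto).
  pose proof (col_nonneg d k b Hk Hcb) as Hnb. pose proof (col_nonneg d k c Hk Hcc) as Hnc.
  assert (HMb : colmat_norm d k b <= M) by (eapply Rle_trans; [|apply Hcol]; eapply Rle_trans; [apply Rmax_l| apply Rmax_r]).
  assert (HMc : colmat_norm d k c <= M) by (eapply Rle_trans; [|apply Hcol]; eapply Rle_trans; [apply Rmax_r| apply Rmax_r]).
  assert (Hsa : sa * sa <= 1) by (pose proof (vnorm_pos d ea); nra).
  assert (Hsb : sb * sb <= 1) by (pose proof (vnorm_pos d eb); nra).
  assert (Hsa' : Rabs sa <= 1) by (rewrite <- (Rabs_R1); apply Rsqr_le_abs_0; unfold Rsqr; lra).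
  assert (Hsb' : Rabs sb <= 1) by (rewrite <- (Rabs_R1); apply Rsqr_le_abs_0; unfold Rsqr; lra).
  assert (HP1 : vnorm d P1 <= K).
  { unfold P1. rewrite vnorm_scal. specialize (Hiii j Hj). rewrite Rabs_mult.
    pose proof (vnorm_pos d (fun l => rsum k (fun i => if Nat.eq_dec i j then 0
              else w i * dot d (a i) (a j) * dot d (b i) (b j) * c i l))).
    assert (K = alpha * rmax_lt k w * sqrt (INR k) / INR d) by (unfold K, wmax; ring).
    pose proof (Rabs_pos sa); pose proof (Rabs_pos sb).
    assert (Rabs sa * Rabs sb <= 1) by nra. nra. }
  pose proof (vnorm_pos d ea) as Hea'. pose proof (vnorm_pos d eb) as Heb'.
  assert (HP2 : vnorm d P2 <= M * (wmax * del) * M * eps0).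
  { unfold P2. rewrite vnorm_scal.
    pose proof (col_bound d k c Hk Hcc za).
    assert (vnorm k za <= (wmax * del) * vnorm k (fun i => dot d (b i) eb)).
    { apply vnorm_pointwise. apply Rmult_le_pos; [|auto]. pose proof (Hw j Hj); lra.
      intros i Hi. unfold za. rewrite Rabs_mult. destruct (Nat.eq_dec i j).
      rewrite Rabs_R0, Rmult_0_l. pose proof (Rabs_pos (dot d (b i) eb)). apply Rmult_le_pos; [|lra]. apply Rmult_le_pos; [|auto]. pose proof (Hw j Hj); lra.
      apply Rmult_le_compat_r. apply Rabs_pos. rewrite Rabs_mult, Rabs_pos_eq by (apply Rlt_le, Hw; auto).
      apply Rmult_le_compat. apply Rlt_le, Hw; auto. apply Rabs_pos. apply Hwmax; auto. apply Hinc; auto. }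
    pose proof (col_T d k b Hk Hcb eb).
    pose proof (vnorm_pos k za). pose proof (vnorm_pos k (fun i => dot d (b i) eb)).
    pose proof (vnorm_pos d (fun l => rsum k (fun i => za i * c i l))).
    assert (0 <= wmax * del) by (apply Rmult_le_pos; auto; pose proof (Hw j Hj); lra).
    assert (vnorm k za <= (wmax*del) * (M*eps0)).
    { eapply Rle_trans. apply H0. apply Rmult_le_compat_l; auto. eapply Rle_trans. apply H1. apply Rmult_le_compat; auto. }
    assert (vnorm d (fun l => rsum k (fun i => za i * c i l)) <= M * (wmax * del) * M * eps0).
    { replace (M * (wmax * del) * M * eps0) with (M * ((wmax*del)*(M*eps0))) by ring.
      eapply Rle_trans. apply H. apply Rmult_le_compat; auto. }
    pose proof (Rabs_pos sa). nra. }
  assert (HP3 : vnorm d P3 <= M * (wmax * del) * M * eps0).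
  { unfold P3. rewrite vnorm_scal.
    pose proof (col_bound d k c Hk Hcc zb).
    assert (vnorm k zb <= (wmax * del) * vnorm k (fun i => dot d (a i) ea)).
    { apply vnorm_pointwise. apply Rmult_le_pos; [|auto]. pose proof (Hw j Hj); lra.
      intros i Hi. unfold zb. rewrite Rabs_mult. destruct (Nat.eq_dec i j).
      rewrite Rabs_R0, Rmult_0_l. pose proof (Rabs_pos (dot d (a i) ea)). apply Rmult_le_pos; [|lra]. apply Rmult_le_pos; [|auto]. pose proof (Hw j Hj); lra.
      apply Rmult_le_compat_r. apply Rabs_pos. rewrite Rabs_mult, Rabs_pos_eq by (apply Rlt_le, Hw; auto).
      apply Rmult_le_compat. apply Rlt_le, Hw; auto. apply Rabs_pos. apply Hwmax; auto. apply Hinc; auto. }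
    pose proof (col_T d k a Hk Hca ea).
    assert (HMa : colmat_norm d k a <= M) by (eapply Rle_trans; [|apply Hcol]; apply Rmax_l).
    pose proof (col_nonneg d k a Hk Hca).
    pose proof (vnorm_pos k zb). pose proof (vnorm_pos k (fun i => dot d (a i) ea)).
    pose proof (vnorm_pos d (fun l => rsum k (fun i => zb i * c i l))).
    assert (0 <= wmax * del) by (apply Rmult_le_pos; auto; pose proof (Hw j Hj); lra).
    assert (vnorm k zb <= (wmax*del) * (M*eps0)).
    { eapply Rle_trans. apply H0. apply Rmult_le_compat_l; auto. eapply Rle_trans. apply H1. apply Rmult_le_compat; auto. }
    assert (vnorm d (fun l => rsum k (fun i => zb i * c i l)) <= M * (wmax * del) * M * eps0).
    { replace (M * (wmax * del) * M * eps0) with (M * ((wmax*del)*(M*eps0))) by ring.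
      eapply Rle_trans. apply H. apply Rmult_le_compat; auto. }
    pose proof (Rabs_pos sb). nra. }
  assert (HP4 : vnorm d P4 <= beta' * wmax * eps0).
  { unfold P4. eapply Rle_trans. apply tform_I_bound; auto.
    pose proof (tnorm_nonneg d T HU). fold wmax in HT.
    assert (tnorm d T * vnorm d ea * vnorm d eb <= alpha0 * wmax * eps0 * eps0).
    { apply Rmult_le_compat; try apply Rmult_le_compat; auto; try apply Rmult_le_pos; auto. }
    assert (alpha0 * eps0 <= beta') by (assert (alpha0 * (beta'/alpha0) = beta') by (field; lra); nra).
    pose proof (Hw j Hj). eapply Rle_trans; [apply H0|].
    replace (alpha0*wmax*eps0*eps0) with (wmax*eps0*(alpha0*eps0)) by ring.
    replace (beta'*wmax*eps0) with (wmax*eps0*beta') by ring.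
    apply Rmult_le_compat_l; [apply Rmult_le_pos; lra|auto]. }
  assert (HP5 : vnorm d P5 <= psi).
  { unfold P5. eapply Rle_trans. apply tform_I_bound; auto. rewrite Hah, Hbh, !Rmult_1_r. apply Rle_refl. }
  set (R := psi + K + eps0 * (wmin * q / 2)).
  assert (Hqw : wmin * q / 2 = wmax * (2 * del * M * M + beta')).
  { unfold q, del, Rdiv. set (sd := / sqrt (INR d)). field. lra. }
  assert (Hr : vnorm d r <= R).
  { unfold r. eapply Rle_trans. apply vnorm5.
    assert (R = psi + K + eps0 * (wmax * (2 * del * M * M + beta'))) by (unfold R; rewrite Hqw; auto).
    rewrite H. nra. }
  assert (Hwmax0 : 0 < wmax) by lra.
  assert (Hee : eps0 * eps0 <= wmin / (6 * wmax)).
  { assert (0 <= wmin / (6 * wmax)) by (apply Rlt_le; unfold Rdiv; apply Rmult_lt_0_compat; [lra| apply Rinv_0_lt_compat; lra]).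
    pose proof (sqrt_pos (wmin / (6 * wmax))). rewrite <- (sqrt_sqrt (wmin / (6 * wmax))) by auto.
    apply Rmult_le_compat; auto. }
  assert (Hee' : eps0 * eps0 <= 1/6).
  { eapply Rle_trans. apply Hee. apply (Rmult_le_reg_r (6*wmax)). lra. unfold Rdiv. rewrite Rmult_assoc, Rinv_l by lra. lra. }
  assert (Hsa2 : 1 - eps0 * eps0 <= sa * sa) by nra.
  assert (Hsb2 : 1 - eps0 * eps0 <= sb * sb) by nra.
  assert (Hlam1 : w j * (1 - eps0 * eps0) <= Rabs lam /\ Rabs lam <= w j).
  { unfold lam. rewrite !Rabs_mult. rewrite (Rabs_pos_eq (w j)) by lra.
    pose proof (Rabs_pos sa); pose proof (Rabs_pos sb).
    assert (Rabs sa * Rabs sa = sa * sa) by (rewrite <- Rabs_mult; apply Rabs_pos_eq; nra).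
    assert (Rabs sb * Rabs sb = sb * sb) by (rewrite <- Rabs_mult; apply Rabs_pos_eq; nra).
    set (t := Rabs sa * Rabs sb).
    assert ((1 - eps0*eps0) * (1 - eps0*eps0) <= t * t).
    { unfold t. replace (Rabs sa * Rabs sb * (Rabs sa * Rabs sb)) with ((Rabs sa * Rabs sa) * (Rabs sb * Rabs sb)) by ring.
      rewrite H1, H2. apply Rmult_le_compat; lra. }
    assert (0 <= t) by (unfold t; apply Rmult_le_pos; auto).
    assert (1 - eps0 * eps0 <= t) by nra.
    assert (t <= 1) by (unfold t; nra).
    rewrite Rmult_assoc. fold t. split; nra. }
  destruct Hlam1 as [Hlam1 Hlam2].
  assert (Hlam3 : wmin / 2 <= Rabs lam) by nra.
  pose proof (vnorm_pos d r) as Hr0.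
  assert (HR0 : 0 <= R) by lra.
  assert (Hdv : forall z : vec, dot d z v = lam * dot d z (c j) + dot d z r).
  { intros z. transitivity (dot d z (fun l => lam * c j l + r l)). unfold dot; apply rsum_ext; intros; rewrite Hv; auto. lin. }
  split.
  - assert (HB : Const + q * eps0 = 2 * R / wmin).
    { unfold Const, R, K, Rdiv. set (id := / INR d). field. lra. }
    rewrite HB. apply dist_le. unfold Rdiv. apply Rmult_le_pos; [lra| apply Rlt_le, Rinv_0_lt_compat; lra].
    intros z Hz Hzc. rewrite Hcj, Rmult_1_r.
    assert (Hzv : dot d z v = 0).
    { destruct (Req_dec (vnorm d v) 0) as [Z|N].
      - unfold dot. apply rsum_z. intros i Hi. rewrite (vnorm0_coord d v Z i Hi). ring.
      - assert (dot d z chat = dot d z v * / vnorm d v) by (unfold dot, chat; rewrite <- rsum_scal_r; apply rsum_ext; intros; unfold Rdiv; ring).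
        rewrite Hzc in H. assert (/ vnorm d v <> 0) by (apply Rinv_neq_0_compat; auto).
        symmetry in H. apply Rmult_integral in H. destruct H; [auto| contradiction]. }
    rewrite Hdv in Hzv.
    pose proof (vnorm_pos d z). assert (Hnz : 0 < vnorm d z) by lra.
    set (x := dot d z (c j)) in *.
    assert (Rabs lam * Rabs x <= vnorm d z * R).
    { rewrite <- Rabs_mult. replace (lam * x) with (- dot d z r) by lra. rewrite Rabs_Ropp.
      eapply Rle_trans. apply cs. apply Rmult_le_compat_l; lra. }
    assert (x * wmin <= 2 * R * vnorm d z).
    { pose proof (Rle_abs x). pose proof (Rabs_pos x). nra. }
    apply (Rmult_le_reg_r (vnorm d z * wmin)). nra.
    unfold Rdiv. replace (x * / vnorm d z * (vnorm d z * wmin)) with (x * wmin) by (field; lra).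
    replace (2 * R * / wmin * (vnorm d z * wmin)) with (2 * R * vnorm d z) by (field; lra). lra.
  - intros _. unfold chat, v. rewrite tform_chat. fold v.
    assert (Hv1 : vnorm d v <= Rabs lam + vnorm d r).
    { rewrite (vnorm_ext d v (fun l => lam * c j l + r l)) by (intros; apply Hv).
      eapply Rle_trans. apply vnorm_triang. rewrite vnorm_scal, Hcj. lra. }
    assert (Hv2 : Rabs lam <= vnorm d v + vnorm d r).
    { replace (Rabs lam) with (vnorm d (fun l => lam * c j l)) by (rewrite vnorm_scal, Hcj; ring).
      rewrite (vnorm_ext d (fun l => lam * c j l) (fun l => v l + - r l)) by (intros; rewrite Hv; ring).
      eapply Rle_trans. apply vnorm_triang. rewrite vnorm_opp. lra. }
    assert (HC : wmin / 2 * Const + wmin * q * eps0 = R + eps0 * (wmin * q / 2)).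
    { unfold Const, R, K, Rdiv. set (id := / INR d). field. lra. }
    rewrite HC.
    assert (Hq0 : 0 <= wmin * q).
    { assert (0 <= wmin * q / (4 * wmax)) by lra. unfold Rdiv in H.
      apply (Rmult_le_compat_r (4*wmax)) in H; [|lra]. rewrite Rmult_assoc, Rinv_l, Rmult_0_l in H by lra. lra. }
    assert (Hwe : wmax * eps0 <= wmin * q / 4).
    { apply (Rmult_le_compat_l wmax) in Heps3; [|lra].
      replace (wmax * (wmin * q / (4 * wmax))) with (wmin * q / 4) in Heps3 by (field; lra). auto. }
    assert (w j * (eps0 * eps0) <= eps0 * (wmin * q / 4)) by nra.
    apply Rabs_le. split; nra.
Qed.
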